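(* Consider the two-dimensional Grover walk on $\mathbb{Z}^2$ with a four-level coin, whose real amplitudes $\alpha_{x,y,c'}(t)$ ($x,y\in\mathbb{Z}$, $c'\in\{0,1,2,3\}$, $t\in\mathbb{Z}_{\ge 0}$) evolve by \[ \alpha_{x,y,0}(t+1)=\sum_{j=0}^3 G_{0j}\alpha_{x+1,y+1,j}(t),\quad \alpha_{x,y,1}(t+1)=\sum_{j=0}^3 G_{1j}\alpha_{x+1,y-1,j}(t), \] \[ \alpha_{x,y,2}(t+1)=\sum_{j=0}^3 G_{2j}\alpha_{x-1,y+1,j}(t),\quad \alpha_{x,y,3}(t+1)=\sum_{j=0}^3 G_{3j}\alpha_{x-1,y-1,j}(t), \] where $G=(G_{ij})_{i,j=0}^3=\frac12\begin{pmatrix}-1&1&1&1\\1&-1&1&1\\1&1&-1&1\\1&1&1&-1\end{pmatrix}$. Suppose the walker starts at the origin with initial amplitudes $\alpha_{0,0,0}(0)=1/2$, $\alpha_{0,0,1}(0)=-1/2$, $\alpha_{0,0,2}(0)=-1/2$, $\alpha_{0,0,3}(0)=1/2$, and $\alpha_{x,y,c'}(0)=0$ for $(x,y)\neq(0,0)$. Then for all $t\ge 0$ and all $(x,y)\in\mathbb{Z}^2$, \[ \alpha_{x-1,y,0}(t)+\alpha_{x-1,y,1}(t)+\alpha_{x+1,y,2}(t)+\alpha_{x+1,y,3}(t)=0, \] \[ \alpha_{x,y-1,0}(t)+\alpha_{x,y-1,2}(t)+\alpha_{x,y+1,1}(t)+\alpha_{x,y+1,3}(t)=0. \]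
   Context: The Grover walk state at time $t$ is $\sum_{x,y,c'}\alpha_{x,y,c'}(t)|x,y\rangle\otimes|c'\rangle$; one time step applies the Grover coin $G$ to the coin and then moves the walker according to the coin state: $|0\rangle$ left-down $(x-1,y-1)$, $|1\rangle$ left-up $(x-1,y+1)$, $|2\rangle$ right-down $(x+1,y-1)$, $|3\rangle$ right-up $(x+1,y+1)$; this is equivalent to the recursions stated. *)

(* Defs.v *)
From HB Require Import structures.
From mathcomp Require Import all_boot all_order all_algebra.
Set Implicit Arguments. Unset Strict Implicit. Unset Printing Implicit Defensive.
Import Order.TTheory GRing.Theory Num.Theory.
Local Open Scope ring_scope.

Definition c0 : 'I_4 := @Ordinal 4 0 isT.
Definition c1 : 'I_4 := @Ordinal 4 1 isT.
Definition c2 : 'I_4 := @Ordinal 4 2 isT.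
Definition c3 : 'I_4 := @Ordinal 4 3 isT.

Definition Grover (R : fieldType) : 'M[R]_4 :=
  \matrix_(i < 4, j < 4) ((if i == j then -1 else 1) / 2%:R).

Definition grover_walk (R : fieldType) (alpha : nat -> int -> int -> 'I_4 -> R) :=
  forall (t : nat) (x y : int),
    [/\ alpha t.+1 x y c0 = \sum_(j < 4) Grover R c0 j * alpha t (x + 1) (y + 1) j,
        alpha t.+1 x y c1 = \sum_(j < 4) Grover R c1 j * alpha t (x + 1) (y - 1) j,
        alpha t.+1 x y c2 = \sum_(j < 4) Grover R c2 j * alpha t (x - 1) (y + 1) j &
        alpha t.+1 x y c3 = \sum_(j < 4) Grover R c3 j * alpha t (x - 1) (y - 1) j].

(* Main.v *)
Require Import Defs.
From HB Require Import structures.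
From mathcomp Require Import all_boot all_order all_algebra.
From mathcomp Require Import zify ring lra.
Import Order.TTheory GRing.Theory Num.Theory.
Local Open Scope ring_scope.

Lemma gsum (R : realFieldType) (c : 'I_4) (f : 'I_4 -> R) :
  \sum_(j < 4) Grover R c j * f j =
  (f c0 + f c1 + f c2 + f c3) / 2%:R - f c.
Proof.
rewrite !big_ord_recr big_ord0 /= !mxE.
rewrite (_ : widen_ord _ (widen_ord _ (widen_ord _ ord_max)) = c0); last exact: val_inj.
rewrite (_ : widen_ord _ (widen_ord _ ord_max) = c1); last exact: val_inj.
rewrite (_ : widen_ord _ ord_max = c2); last exact: val_inj.
rewrite (_ : ord_max = c3); last exact: val_inj.
case: c => [[|[|[|[|//]]]] i] /=.
all: rewrite (bool_irrelevance i isT) -/c0 -/c1 -/c2 -/c3; field.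
all: by [].
Qed.

Theorem lemma1 (R : realFieldType) (alpha : nat -> int -> int -> 'I_4 -> R) :
  grover_walk alpha ->
  alpha 0%N 0 0 c0 = 1 / 2%:R ->
  alpha 0%N 0 0 c1 = - (1 / 2%:R) ->
  alpha 0%N 0 0 c2 = - (1 / 2%:R) ->
  alpha 0%N 0 0 c3 = 1 / 2%:R ->
  (forall (x y : int) (c : 'I_4), (x, y) != (0, 0) -> alpha 0%N x y c = 0) ->
  forall (t : nat) (x y : int),
    alpha t (x - 1) y c0 + alpha t (x - 1) y c1
      + alpha t (x + 1) y c2 + alpha t (x + 1) y c3 = 0 /\
    alpha t x (y - 1) c0 + alpha t x (y - 1) c2
      + alpha t x (y + 1) c1 + alpha t x (y + 1) c3 = 0.
Proof.
move=> Hw H0 H1 H2 H3 Hz t; elim: t => [|t IH] x y.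
  have Z : forall u v c, (u != 0) || (v != 0) -> alpha 0%N u v c = 0.
    by move=> u v c h; apply: Hz; rewrite xpair_eqE negb_and.
  split.
  - have [->|hy] := eqVneq y 0; last by rewrite !Z ?hy ?orbT // !addr0.
    have [->|hx1] := eqVneq x 1.
      rewrite subrr H0 H1 !Z //; lra.
    have [->|hx2] := eqVneq x (-1).
      rewrite (_ : -1 + 1 = 0 :> int) // H2 H3 !Z //; lra.
    rewrite !Z ?addr0 //; lia.
  - have [->|hx] := eqVneq x 0; last by rewrite !Z ?hx // !addr0.
    have [->|hy1] := eqVneq y 1.
      rewrite subrr H0 H2 !Z //; lra.
    have [->|hy2] := eqVneq y (-1).
      rewrite (_ : -1 + 1 = 0 :> int) // H1 H3 !Z //; lra.
    rewrite !Z ?addr0 //; lia.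
have E1 : forall u : int, u - 1 + 1 = u by move=> u; ring.
have E2 : forall u : int, u + 1 - 1 = u by move=> u; ring.
have E3 : forall u : int, u - 1 - 1 = u - (1 + 1) by move=> u; ring.
have E4 : forall u : int, u + 1 + 1 = u + (1 + 1) by move=> u; ring.
split.
- case: (Hw t (x - 1) y) => -> -> _ _.
  case: (Hw t (x + 1) y) => _ _ -> ->.
  rewrite !gsum !E1 !E2.
  have [A B] := IH x y. lra.
- case: (Hw t x (y - 1)) => -> _ -> _.
  case: (Hw t x (y + 1)) => _ -> _ ->.
  rewrite !gsum !E1 !E2.
  have [A B] := IH x y. lra.
Qed.
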